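(* Let $k\in\mathbb{Z}$ and $z\in\mathbb{C}$ with $|z|>e$. Then $$|W_k'(z)| \le \frac{1}{|z|}\frac{W_0(|z|)}{W_0(|z|)-1}.$$
   Context: $W_k$ denotes the $k$-th branch of the Lambert $W$ function (inverse of $w\mapsto we^w$) in the standard convention of Corless, Gonnet, Hare, Jeffrey and Knuth (1996); $W_0$ is the principal branch, real and increasing on $[-1/e,\infty)$. On a branch cut, values are defined by continuity from the upper half plane and $W_k'$ denotes the derivative of the fixed branch $W_k$ (directional derivative along the cut there). *)

(* Defs.v *)
From Stdlib Require Import Reals ZArith ClassicalEpsilon.
From Coquelicot Require Import Coquelicot.
Open Scope R_scope.

Definition Cexp (w : C) : C := (exp (Re w) * cos (Im w), exp (Re w) * sin (Im w)).

Definition is_Arg (w : C) (th : R) : Prop :=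
  - PI < th <= PI /\ w = (Cmod w * cos th, Cmod w * sin th).

(** Branch relation: w e^w = z and w + Log w = Log z + 2 pi i k
    (Log = principal logarithm, arguments in (-pi, pi]).  For z off
    {0} and off [-1/e,0) this singles out exactly W_k(z) in the
    convention of Corless et al. (1996), with counterclockwise continuity
    on the branch cuts (Jeffrey-Hare-Corless, "Unwinding the branches of
    the Lambert W function", 1996). *)
Definition LambertW_rel (k : Z) (z w : C) : Prop :=
  Cmult w (Cexp w) = z /\
  exists a b : R, is_Arg w a /\ is_Arg z b /\ Im w + a = b + 2 * PI * IZR k.

Definition LambertW (k : Z) (z : C) : C :=
  epsilon (inhabits (RtoC 0)) (LambertW_rel k z).

Definition W0R (x : R) : R :=
  epsilon (inhabits 0) (fun w => -1 <= w /\ w * exp w = x).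

Definition on_neg_real_axis (z : C) : Prop := Im z = 0 /\ Re z < 0.

Definition LambertW_deriv (k : Z) (z d : C) : Prop :=
  (on_neg_real_axis z ->
     is_derive (K := R_AbsRing) (fun t : R => LambertW k (Cplus z (RtoC t))) 0 d) /\
  (~ on_neg_real_axis z ->
     is_derive (K := C_AbsRing) (V := C_NormedModule) (LambertW k) z d).

(* Main.v *)
Require Import Defs.
From Stdlib Require Import Reals ZArith.
From Coquelicot Require Import Coquelicot.
From Stdlib Require Import Lra Lia Psatz ClassicalEpsilon Classical.
Open Scope R_scope.

Lemma to_C_derive (f : C -> C) (z0 d : C) :
  (forall eps, 0 < eps -> exists del, 0 < del /\ forall z,
     Cmod (Cminus z z0) < del ->
     Cmod (Cminus (Cminus (f z) (f z0)) (Cmult (Cminus z z0) d)) <= eps * Cmod (Cminus z z0)) ->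
  is_derive (K := C_AbsRing) (V := C_NormedModule) f z0 d.
Proof.
  intros H. split.
  - apply is_linear_scal_l.
  - intros x Hx. apply (is_filter_lim_locally_unique (K:=C_AbsRing) (V:=AbsRing_NormedModule C_AbsRing)) in Hx. subst x.
    intros eps. apply (locally_le_locally_norm (K:=C_AbsRing) (V:=AbsRing_NormedModule C_AbsRing)).
    destruct (H eps (cond_pos eps)) as [del [Hdel Hz]].
    exists (mkposreal del Hdel). intros y Hy. unfold ball_norm in Hy. simpl in Hy.
    apply Hz. exact Hy.
Qed.

Lemma to_R_derive (f : C -> C) (z0 d : C) :
  (forall eps, 0 < eps -> exists del, 0 < del /\ forall t : R,
     Rabs t < del ->
     Cmod (Cminus (Cminus (f (Cplus z0 (RtoC t))) (f z0)) (Cmult (RtoC t) d)) <= eps * Rabs t) ->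
  is_derive (K := R_AbsRing) (fun t : R => f (Cplus z0 (RtoC t))) 0 d.
Proof.
  intros H. split.
  - apply is_linear_scal_l.
  - intros x Hx. apply (is_filter_lim_locally_unique (K:=R_AbsRing) (V:=AbsRing_NormedModule R_AbsRing)) in Hx. subst x.
    intros eps. apply (locally_le_locally_norm (K:=R_AbsRing) (V:=AbsRing_NormedModule R_AbsRing)).
    destruct (H eps (cond_pos eps)) as [del [Hdel Hz]].
    exists (mkposreal del Hdel). intros y Hy. unfold ball_norm in Hy. simpl in Hy.
    assert (E: Cplus z0 (RtoC 0) = z0).
    { destruct z0; unfold Cplus, RtoC; simpl; f_equal; ring. }
    rewrite E.
    assert (Ey : norm (minus y 0) = Rabs y).
    { change (Rabs (y + - 0) = Rabs y). f_equal. ring. }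
    rewrite Ey in Hy |- *.
    specialize (Hz y Hy).
    eapply Rle_trans; [|exact Hz]. right.
    destruct (f z0) as [a b], (f (Cplus z0 (RtoC y))) as [a' b'], d as [d1 d2].
    unfold Cmod, Cminus, Cplus, Copp, Cmult, RtoC. simpl.
    unfold norm, minus, plus, opp, scal; simpl. unfold prod_norm, prod_plus, prod_opp, prod_scal; simpl.
    unfold norm, minus, plus, opp, scal, mult; simpl. unfold abs; simpl.
    rewrite !Rmult_1_r, <- !Rabs_mult, !Rabs_pos_eq by apply Rle_0_sqr. unfold mult; simpl. f_equal. ring.
Qed.

Lemma C_eq (x y : C) : fst x = fst y -> snd x = snd y -> x = y.
Proof. destruct x, y; simpl; intros; subst; auto. Qed.

Lemma Cmod_polar r t : 0 <= r -> Cmod (r * cos t, r * sin t) = r.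
Proof.
  intros Hr. unfold Cmod; cbn [fst snd].
  replace ((r * cos t) ^ 2 + (r * sin t) ^ 2) with (r ^ 2).
  - apply sqrt_pow2; auto.
  - pose proof (sin2_cos2 t). unfold Rsqr in H. nra.
Qed.

Lemma Cmod_Cexp w : Cmod (Cexp w) = exp (Re w).
Proof. unfold Cexp. apply Cmod_polar. left; apply exp_pos. Qed.

Lemma Cexp_add u v : Cexp (Cplus u v) = Cmult (Cexp u) (Cexp v).
Proof.
  destruct u as [a b], v as [c d]. unfold Cexp, Cplus, Cmult; simpl.
  rewrite exp_plus, cos_plus, sin_plus. apply C_eq; simpl; ring.
Qed.

Lemma cos_eq1_aux t : 0 <= t < 2 * PI -> cos t = 1 -> t = 0.
Proof.
  intros Ht Hc. pose proof PI_RGT_0.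
  destruct (Rle_lt_dec t PI).
  - apply cos_inj; try lra. rewrite cos_0; auto.
  - assert (2 * PI - t = 0).
    { apply cos_inj; try lra.
      rewrite cos_minus, cos_2PI, sin_2PI, cos_0. lra. }
    lra.
Qed.

Lemma cos_eq1 t : - (2 * PI) < t < 2 * PI -> cos t = 1 -> t = 0.
Proof.
  intros Ht Hc. destruct (Rle_lt_dec 0 t).
  - apply cos_eq1_aux; lra.
  - assert (- t = 0). { apply cos_eq1_aux. lra. rewrite cos_neg; auto. } lra.
Qed.

Lemma is_Arg_eqs z b : is_Arg z b -> fst z = Cmod z * cos b /\ snd z = Cmod z * sin b.
Proof.
  intros [_ H]. split.
  - transitivity (fst (Cmod z * cos b, Cmod z * sin b)). rewrite <- H. reflexivity. reflexivity.
  - transitivity (snd (Cmod z * cos b, Cmod z * sin b)). rewrite <- H. reflexivity. reflexivity.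
Qed.

Lemma arg_unique z b b' : 0 < Cmod z -> is_Arg z b -> is_Arg z b' -> b = b'.
Proof.
  intros Hz Hb Hb'.
  destruct (is_Arg_eqs z b Hb) as [E1 E2]. destruct (is_Arg_eqs z b' Hb') as [E3 E4].
  assert (Hc : cos b = cos b').
  { apply (Rmult_eq_reg_l (Cmod z)); lra. }
  assert (Hs : sin b = sin b').
  { apply (Rmult_eq_reg_l (Cmod z)); lra. }
  assert (cos (b - b') = 1).
  { rewrite cos_minus, <- Hc, <- Hs. pose proof (sin2_cos2 b). unfold Rsqr in H. lra. }
  destruct Hb as [Hb _], Hb' as [Hb' _].
  pose proof PI_RGT_0.
  assert (b - b' = 0) by (apply cos_eq1; auto; lra). lra.
Qed.

Lemma cos_periodZ x k : cos (x + 2 * PI * IZR k) = cos x.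
Proof.
  destruct (Z_le_gt_dec 0 k).
  - rewrite <- (Z2Nat.id k) by auto. rewrite <- INR_IZR_INZ.
    replace (x + 2 * PI * INR (Z.to_nat k)) with (x + 2 * INR (Z.to_nat k) * PI) by ring.
    apply cos_period.
  - set (n := Z.to_nat (- k)).
    assert (IZR k = - INR n).
    { unfold n. rewrite INR_IZR_INZ, Z2Nat.id by lia. rewrite opp_IZR. ring. }
    rewrite H. rewrite <- (cos_period (x + 2 * PI * - INR n) n). f_equal. ring.
Qed.

Lemma sin_periodZ x k : sin (x + 2 * PI * IZR k) = sin x.
Proof.
  destruct (Z_le_gt_dec 0 k).
  - rewrite <- (Z2Nat.id k) by auto. rewrite <- INR_IZR_INZ.
    replace (x + 2 * PI * INR (Z.to_nat k)) with (x + 2 * INR (Z.to_nat k) * PI) by ring.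
    apply sin_period.
  - set (n := Z.to_nat (- k)).
    assert (IZR k = - INR n).
    { unfold n. rewrite INR_IZR_INZ, Z2Nat.id by lia. rewrite opp_IZR. ring. }
    rewrite H. rewrite <- (sin_period (x + 2 * PI * - INR n) n). f_equal. ring.
Qed.

Lemma arg_atan u : 0 < fst u -> is_Arg u (atan (snd u / fst u)).
Proof.
  intros Hx. destruct u as [x y]; simpl in *.
  pose proof (atan_bound (y / x)). pose proof PI_RGT_0.
  split. lra.
  rewrite cos_atan, sin_atan.
  assert (Hs : 0 < sqrt (1 + (y / x)²)).
  { apply sqrt_lt_R0. pose proof (Rle_0_sqr (y/x)). lra. }
  assert (Hm : Cmod (x, y) = x * sqrt (1 + (y / x)²)).
  { unfold Cmod; cbn [fst snd]. rewrite <- (sqrt_pow2 x) at 2 by lra.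
    rewrite <- sqrt_mult by (try nra; pose proof (Rle_0_sqr (y/x)); lra).
    f_equal. unfold Rsqr. field. lra. }
  rewrite Hm. apply C_eq; simpl; field; lra.
Qed.

Lemma arg_rot u c be : is_Arg u c -> - PI < c + be <= PI ->
  is_Arg (Cmult u (cos be, sin be)) (c + be).
Proof.
  intros Hu Hr. destruct (is_Arg_eqs u c Hu) as [E1 E2].
  split; auto.
  assert (Cmod (Cmult u (cos be, sin be)) = Cmod u).
  { rewrite Cmod_mult. rewrite <- (Rmult_1_l (cos be)), <- (Rmult_1_l (sin be)).
    rewrite Cmod_polar by lra. ring. }
  rewrite H. destruct u as [x y]; simpl in *. unfold Cmult; simpl.
  set (r := Cmod (x, y)) in *. clearbody r. subst x y.
  rewrite cos_plus, sin_plus. apply C_eq; simpl; ring.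
Qed.

Lemma arg_exists z : 0 < Cmod z -> exists b, is_Arg z b.
Proof.
  intros Hz. pose proof PI_RGT_0.
  destruct z as [x y].
  destruct (Rlt_le_dec 0 x).
  - exists (atan (y / x)). apply (arg_atan (x, y)); auto.
  - destruct (Rtotal_order y 0) as [Hy|[Hy|Hy]].
    +
      set (u := ((-y), x)).
      assert (Hu : is_Arg u (atan (snd u / fst u))) by (apply arg_atan; simpl; lra).
      pose proof (atan_bound (snd u / fst u)).
      exists (atan (snd u / fst u) + - (PI / 2)).
      replace (x, y) with (Cmult u (cos (- (PI/2)), sin (- (PI/2)))).
      apply arg_rot; auto; lra.
      rewrite cos_neg, sin_neg, cos_PI2, sin_PI2. unfold u, Cmult; apply C_eq; simpl; ring.
    + subst y. exists PI. split. lra.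
      rewrite cos_PI, sin_PI. unfold Cmod; cbn [fst snd].
      replace (x ^ 2 + 0 ^ 2) with ((-x) ^ 2) by ring. rewrite sqrt_pow2 by lra.
      apply C_eq; simpl; ring.
    + set (u := (y, -x)).
      assert (Hu : is_Arg u (atan (snd u / fst u))) by (apply arg_atan; simpl; lra).
      pose proof (atan_bound (snd u / fst u)).
      exists (atan (snd u / fst u) + (PI / 2)).
      replace (x, y) with (Cmult u (cos (PI/2), sin (PI/2))).
      apply arg_rot; auto; lra.
      rewrite cos_PI2, sin_PI2. unfold u, Cmult; apply C_eq; simpl; ring.
Qed.

Lemma cont_eps f x : continuity_pt f x -> forall eps, 0 < eps ->
  exists del, 0 < del /\ forall y, Rabs (y - x) < del -> Rabs (f y - f x) < eps.
Proof.
  intros H eps He. destruct (H eps He) as [alp [Ha Hf]]. exists alp. split; auto.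
  intros y Hy. destruct (Req_dec y x).
  - subst. rewrite Rminus_eq_0, Rabs_R0; auto.
  - apply (Hf y). split. split. constructor. auto. exact Hy.
Qed.

Lemma abs_bnd x a : Rabs x <= a -> - a <= x <= a.
Proof. intros H. pose proof (Rle_abs x). pose proof (Rle_abs (- x)). rewrite Rabs_Ropp in H1. lra. Qed.
Lemma abs_bnd' x a : - a <= x <= a -> Rabs x <= a.
Proof. intros H. unfold Rabs; destruct (Rcase_abs x); lra. Qed.
Lemma abs_lt x a : Rabs x < a -> - a < x < a.
Proof. intros H. pose proof (Rle_abs x). pose proof (Rle_abs (- x)). rewrite Rabs_Ropp in H1. lra. Qed.
Lemma abs_lt' x a : - a < x < a -> Rabs x < a.
Proof. intros H. unfold Rabs; destruct (Rcase_abs x); lra. Qed.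

Lemma Cmod_unit t : Cmod (cos t, sin t) = 1.
Proof. rewrite <- (Rmult_1_l (cos t)), <- (Rmult_1_l (sin t)). apply Cmod_polar; lra. Qed.

Lemma Rabs_fst_le (c : C) : Rabs (fst c) <= Cmod c.
Proof. pose proof (Rmax_Cmod c). pose proof (Rmax_l (Rabs (fst c)) (Rabs (snd c))). lra. Qed.
Lemma Rabs_snd_le (c : C) : Rabs (snd c) <= Cmod c.
Proof. pose proof (Rmax_Cmod c). pose proof (Rmax_r (Rabs (fst c)) (Rabs (snd c))). lra. Qed.

Lemma arg_cont z0 b0 : 0 < Cmod z0 -> is_Arg z0 b0 -> - PI < b0 < PI ->
  forall eta, 0 < eta -> exists del, 0 < del /\ forall z,
    Cmod (Cminus z z0) < del -> exists b, is_Arg z b /\ Rabs (b - b0) < eta.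
Proof.
  intros Hz0 Hb0 Hr eta Heta. pose proof PI_RGT_0. pose proof PI2_1.
  set (rho := Cmod z0).
  set (e2 := Rmin (Rmin eta 1) (Rmin (PI - b0) (PI + b0))).
  assert (He2 : 0 < e2).
  { unfold e2. apply Rmin_glb_lt; apply Rmin_glb_lt; lra. }
  assert (He2' : e2 <= 1) by (unfold e2; eapply Rle_trans; [apply Rmin_l|apply Rmin_r]).
  assert (He2a : e2 <= eta) by (unfold e2; eapply Rle_trans; [apply Rmin_l|apply Rmin_l]).
  assert (He2b : e2 <= PI - b0) by (unfold e2; eapply Rle_trans; [apply Rmin_r|apply Rmin_l]).
  assert (He2c : e2 <= PI + b0) by (unfold e2; eapply Rle_trans; [apply Rmin_r|apply Rmin_r]).
  assert (Ht : 0 < tan e2) by (apply tan_gt_0; lra).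
  exists (Rmin (rho / 2) (rho * tan e2 / 2)). split.
  { apply Rmin_glb_lt. unfold rho; lra. unfold rho. apply Rmult_lt_0_compat; [|lra]. nra. }
  intros z Hz.
  assert (Hz1 : Cmod (Cminus z z0) < rho / 2) by (eapply Rlt_le_trans; [exact Hz| apply Rmin_l]).
  assert (Hz2 : Cmod (Cminus z z0) < rho * tan e2 / 2) by (eapply Rlt_le_trans; [exact Hz| apply Rmin_r]).
  set (e0 := (cos b0, - sin b0)).
  set (u := Cmult z e0).
  assert (Hu0 : Cmult z0 e0 = RtoC rho).
  { destruct (is_Arg_eqs z0 b0 Hb0) as [E1 E2]. destruct z0 as [x y]. simpl in *.
    fold rho in E1, E2. unfold e0, Cmult, RtoC. rewrite E1, E2. apply C_eq; simpl.
    pose proof (sin2_cos2 b0) as SC. unfold Rsqr in SC.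
    transitivity (rho * (sin b0 * sin b0 + cos b0 * cos b0)); [ring | rewrite SC; ring]. ring. }
  assert (Hd : Cmod (Cminus u (RtoC rho)) = Cmod (Cminus z z0)).
  { rewrite <- Hu0. unfold u. replace (Cminus (Cmult z e0) (Cmult z0 e0)) with (Cmult (Cminus z z0) e0) by ring.
    rewrite Cmod_mult. unfold e0. rewrite <- sin_neg, <- (cos_neg b0) at 1. rewrite Cmod_unit. ring. }
  assert (A1 := Rabs_fst_le (Cminus u (RtoC rho))). rewrite Hd in A1.
  assert (A2 := Rabs_snd_le (Cminus u (RtoC rho))). rewrite Hd in A2.
  replace (fst (Cminus u (RtoC rho))) with (fst u - rho) in A1 by (simpl; ring).
  replace (snd (Cminus u (RtoC rho))) with (snd u) in A2 by (simpl; ring).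
  apply abs_bnd in A1. apply abs_bnd in A2.
  assert (Hp : rho / 2 < fst u) by lra.
  assert (Hrho : 0 < rho) by (unfold rho; lra).
  assert (Hub : - tan e2 < snd u / fst u < tan e2).
  { split.
    - apply (Rmult_lt_reg_r (fst u)). lra. field_simplify; try lra. nra.
    - apply (Rmult_lt_reg_r (fst u)). lra. field_simplify; try lra. nra. }
  assert (Hc : - e2 < atan (snd u / fst u) < e2).
  { rewrite <- (atan_tan e2) by lra. rewrite <- atan_opp. split; apply atan_increasing; lra. }
  assert (Ez : z = Cmult u (cos b0, sin b0)).
  { unfold u, e0. apply C_eq; destruct z as [x y]; simpl;
    pose proof (sin2_cos2 b0) as SC; unfold Rsqr in SC.
    transitivity (x * (sin b0 * sin b0 + cos b0 * cos b0)); [rewrite SC; ring | ring].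
    transitivity (y * (sin b0 * sin b0 + cos b0 * cos b0)); [rewrite SC; ring | ring]. }
  exists (atan (snd u / fst u) + b0). split.
  - rewrite Ez. apply arg_rot. apply arg_atan. lra. lra.
  - replace (atan (snd u / fst u) + b0 - b0) with (atan (snd u / fst u)) by ring.
    apply abs_lt'. lra.
Qed.

Definition Phi (B t : R) := (B - t) * cos t / sin t + ln ((B - t) / sin t).
Definition Sol (A B : R) (w : C) :=
  0 < Cmod w /\ Re w + ln (Cmod w) = A /\ exists a, is_Arg w a /\ Im w + a = B.

Lemma ln_le_sub1 r : 0 < r -> ln r <= r - 1.
Proof. intros Hr. pose proof (exp_ineq1_le (ln r)). rewrite exp_ln in H; lra. Qed.

Lemma Sol_not_pi A B w a : 1 < A -> Sol A B w -> is_Arg w a -> a <> PI.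
Proof.
  intros HA [Hr [HE _]] Ha Hpi. subst a.
  destruct (is_Arg_eqs w PI Ha) as [E1 _]. rewrite cos_PI in E1.
  unfold Re in HE. rewrite E1 in HE. pose proof (ln_le_sub1 _ Hr). lra.
Qed.

Lemma sin_neg_range a : - PI < a <= 0 -> sin a <= 0.
Proof.
  intros H. rewrite <- (Ropp_involutive a), sin_neg.
  assert (0 <= sin (- a)) by (apply sin_ge_0; lra). lra.
Qed.

Lemma sin_neg_range' a : - PI < a < 0 -> sin a < 0.
Proof.
  intros H. rewrite <- (Ropp_involutive a), sin_neg.
  assert (0 < sin (- a)) by (apply sin_gt_0; lra). lra.
Qed.

Lemma Sol_pos A B w : 1 < A -> Sol A B w -> 0 < B ->
  exists a, 0 < a < PI /\ a < B /\ Phi B a = A /\ w = ((B - a) * cos a / sin a, B - a).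
Proof.
  intros HA HS HB. pose proof HS as [Hr [HE [a [Ha HI]]]].
  pose proof (Sol_not_pi A B w a HA HS Ha) as Hnp.
  destruct (is_Arg_eqs w a Ha) as [E1 E2]. destruct Ha as [Hra _].
  unfold Re, Im in *.
  destruct (Rle_lt_dec a 0) as [Hn|Hp].
  { pose proof (sin_neg_range a ltac:(lra)). nra. }
  assert (Ha' : 0 < a < PI) by (destruct Hra; split; [lra|]; destruct H0; [lra|contradiction]).
  assert (Hs : 0 < sin a) by (apply sin_gt_0; lra).
  assert (Hy : snd w > 0) by (rewrite E2; nra).
  exists a. split; [auto|]. split; [lra|].
  assert (Er : Cmod w = (B - a) / sin a).
  { apply (Rmult_eq_reg_r (sin a)); [|lra]. unfold Rdiv. rewrite Rmult_assoc, Rinv_l, Rmult_1_r by lra. lra. }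
  split.
  - unfold Phi. rewrite <- Er. rewrite <- HE, E1.
    replace (Cmod w * cos a) with ((B - a) * cos a / sin a) by (rewrite Er; field; lra). reflexivity.
  - apply C_eq; cbn [fst snd].
    + rewrite E1, Er. field. lra.
    + lra.
Qed.

Lemma Sol_zero A w : 1 < A -> Sol A 0 w -> w = (Cmod w, 0) /\ Cmod w + ln (Cmod w) = A.
Proof.
  intros HA HS. pose proof HS as [Hr [HE [a [Ha HI]]]].
  pose proof (Sol_not_pi A 0 w a HA HS Ha) as Hnp.
  destruct (is_Arg_eqs w a Ha) as [E1 E2]. destruct Ha as [Hra _].
  unfold Re, Im in *.
  assert (a = 0).
  { destruct (Rtotal_order a 0) as [H|[H|H]]; auto.
    - pose proof (sin_neg_range' a ltac:(lra)). nra.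
    - assert (a < PI) by (destruct Hra as [_ [H1|H1]]; [lra|contradiction]).
      pose proof (sin_gt_0 a H H0). nra. }
  subst a. rewrite sin_0 in E2. rewrite cos_0 in E1.
  split. apply C_eq; simpl; lra. rewrite <- HE. rewrite E1 at 1. ring.
Qed.

Lemma Sol_conj A B w : 1 < A -> Sol A B w -> Sol A (- B) (Cconj w).
Proof.
  intros HA HS. pose proof HS as [Hr [HE [a [Ha HI]]]].
  pose proof (Sol_not_pi A B w a HA HS Ha) as Hnp.
  destruct (is_Arg_eqs w a Ha) as [E1 E2]. destruct Ha as [Hra _].
  unfold Sol. rewrite Cmod_conj. split; auto. split. unfold Re in *; simpl; auto.
  exists (- a). split.
  - split. destruct Hra as [H1 [H2|H2]]; [lra|contradiction].
    rewrite Cmod_conj, cos_neg, sin_neg. unfold Cconj. apply C_eq; simpl; lra.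
  - unfold Im in *; simpl. lra.
Qed.

Lemma Sol_build_pos B t : 0 < t < PI -> t < B ->
  Sol (Phi B t) B ((B - t) * cos t / sin t, B - t).
Proof.
  intros Ht HtB. assert (Hs : 0 < sin t) by (apply sin_gt_0; lra).
  assert (Ew : ((B - t) * cos t / sin t, B - t) = ((B - t) / sin t * cos t, (B - t) / sin t * sin t)).
  { apply C_eq; simpl; field; lra. }
  assert (Hr : 0 < (B - t) / sin t) by (apply Rdiv_lt_0_compat; lra).
  assert (Em : Cmod ((B - t) * cos t / sin t, B - t) = (B - t) / sin t).
  { rewrite Ew. apply Cmod_polar. lra. }
  split. lra. split.
  - rewrite Em. unfold Phi, Re; simpl. auto.
  - exists t. split.
    + split. lra. rewrite Em. exact Ew.
    + unfold Im; simpl. ring.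
Qed.

Lemma Sol_build_zero r : 0 < r -> Sol (r + ln r) 0 (r, 0).
Proof.
  intros Hr. assert (Em : Cmod (r, 0) = r).
  { rewrite <- Cmod_polar with (t := 0) by lra. rewrite cos_0, sin_0. f_equal; apply C_eq; simpl; ring. }
  split. lra. split. rewrite Em. unfold Re; simpl; auto.
  exists 0. split. split. pose proof PI_RGT_0; lra. rewrite Em, cos_0, sin_0. apply C_eq; simpl; ring.
  unfold Im; simpl; ring.
Qed.

Lemma rel_iff k z b w : 0 < Cmod z -> is_Arg z b ->
  (LambertW_rel k z w <-> Sol (ln (Cmod z)) (b + 2 * PI * IZR k) w).
Proof.
  intros Hz Hb. split.
  - intros [Hm [a [b' [Ha [Hb' HI]]]]].
    assert (b' = b) by (apply (arg_unique z); auto). subst b'.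
    assert (Em : Cmod z = Cmod w * exp (Re w)).
    { rewrite <- Hm, Cmod_mult, Cmod_Cexp. auto. }
    assert (Hw : 0 < Cmod w).
    { destruct (Cmod_ge_0 w); auto. rewrite <- H in Em. lra. }
    split; auto. split.
    + rewrite Em, ln_mult, ln_exp by (auto; apply exp_pos). ring.
    + exists a. split; auto.
  - intros [Hw [HE [a [Ha HI]]]].
    split.
    + destruct (is_Arg_eqs w a Ha) as [E1 E2]. destruct (is_Arg_eqs z b Hb) as [E3 E4].
      assert (Hexp : Cmod w * exp (Re w) = Cmod z).
      { rewrite <- (exp_ln (Cmod w)) by auto. rewrite <- exp_plus.
        rewrite <- (exp_ln (Cmod z)) by auto. f_equal. lra. }
      apply C_eq; unfold Cmult, Cexp; simpl; rewrite E3 || rewrite E4;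
      rewrite ?E1, ?E2; unfold Re, Im in *.
      * rewrite <- Hexp. replace b with (snd w + a - 2 * PI * IZR k) by lra.
        replace (snd w + a - 2 * PI * IZR k) with ((snd w + a) + 2 * PI * IZR (- k)) by (rewrite opp_IZR; ring).
        rewrite cos_periodZ, cos_plus. ring.
      * rewrite <- Hexp. replace b with ((snd w + a) + 2 * PI * IZR (- k)) by (rewrite opp_IZR; lra).
        rewrite sin_periodZ, sin_plus. ring.
    + exists a, b. split; [exact Ha|]. split; [exact Hb|]. exact HI.
Qed.

Definition dPhi (B t : R) := - (2 * cos t / sin t + (B - t) / (sin t ^ 2) + 1 / (B - t)).

Lemma Phi_derive B t : 0 < sin t -> t < B -> is_derive (Phi B) t (dPhi B t).
Proof.
  intros Hs Ht. unfold Phi, dPhi.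
  auto_derive.
  - repeat split; try lra. apply Rdiv_lt_0_compat; lra.
  - pose proof (sin2_cos2 t) as SC. unfold Rsqr in SC. field_simplify; try lra.
    f_equal. replace (cos t ^ 2) with (1 - sin t ^ 2) by nra. ring.
Qed.

Lemma dPhi_neg B t : 0 < sin t -> t < B -> dPhi B t < 0.
Proof.
  intros Hs Ht. unfold dPhi. pose proof (sin2_cos2 t) as SC. unfold Rsqr in SC.
  set (y := B - t). assert (Hy : 0 < y) by (unfold y; lra). clearbody y.
  set (s := sin t) in *. set (c := cos t) in *. clearbody s c.
  assert (0 < 2 * c / s + y / s ^ 2 + 1 / y); [|lra].
  replace (2 * c / s + y / s ^ 2 + 1 / y) with (((y + c * s) ^ 2 + s ^ 4) / (y * s ^ 2)).
  - apply Rdiv_lt_0_compat.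
    + pose proof (pow_lt s 4 Hs). pose proof (pow2_ge_0 (y + c * s)). lra.
    + pose proof (pow_lt s 2 Hs). apply Rmult_lt_0_compat; lra.
  - field_simplify; try lra. f_equal. replace (c ^ 2) with (1 - s ^ 2) by nra. ring.
Qed.


Lemma is_derive_cont f x l : is_derive f x l -> continuity_pt f x.
Proof. intros H. apply derivable_continuous_pt. exists l. apply is_derive_Reals. auto. Qed.

Lemma Phi_decr B s t : 0 < s -> s < t -> t < PI -> t < B -> Phi B t < Phi B s.
Proof.
  intros Hs Hst HtP HtB.
  assert (- Phi B s < - Phi B t); [|lra].
  apply (incr_function (fun x => - Phi B x) (Finite 0) (Finite (Rmin PI B)) (fun x => - dPhi B x)).
  - intros x H1 H2. simpl in H1, H2.
    assert (x < PI) by (eapply Rlt_le_trans; [exact H2|apply Rmin_l]).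
    assert (x < B) by (eapply Rlt_le_trans; [exact H2|apply Rmin_r]).
    exact (is_derive_opp (Phi B) x (dPhi B x) (Phi_derive B x ltac:(apply sin_gt_0; lra) H0)).
  - intros x H1 H2. simpl in H1, H2.
    assert (x < PI) by (eapply Rlt_le_trans; [exact H2|apply Rmin_l]).
    assert (x < B) by (eapply Rlt_le_trans; [exact H2|apply Rmin_r]).
    assert (dPhi B x < 0) by (apply dPhi_neg; auto; apply sin_gt_0; lra). lra.
  - simpl; lra.
  - auto.
  - simpl. apply Rmin_glb_lt; auto.
Qed.

Lemma sin_third x : 0 <= x <= PI / 2 -> x / 3 <= sin x.
Proof.
  intros H. pose proof PI_4.
  destruct (sin_bound x 0) as [H1 _]. lra. pose proof PI_RGT_0. lra.
  replace (sin_approx x (2 * 0 + 1)) with (x - x ^ 3 / 6) in H1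
    by (unfold sin_approx, sin_term; simpl; field).
  assert (x ^ 2 <= 4) by nra. nra.
Qed.

Lemma Phi_alt B t : 0 < sin t -> Phi B t = ((B - t) / sin t) * cos t + ln ((B - t) / sin t).
Proof. intros. unfold Phi. field. lra. Qed.

Lemma ln_pos r : 1 < r -> 0 < ln r.
Proof. intros. rewrite <- ln_1. apply ln_increasing; lra. Qed.

Lemma exist_pos A B : 1 < A -> 0 < B -> exists t, 0 < t < PI /\ t < B /\ Phi B t = A.
Proof.
  intros HA HB. pose proof PI_RGT_0 as HPI. pose proof PI_4.
  set (t1 := Rmin (PI / 3) (B / (4 * A + 2))).
  assert (Ht1a : t1 <= PI / 3) by apply Rmin_l.
  assert (Ht1b : t1 <= B / (4 * A + 2)) by apply Rmin_r.
  assert (Ht1p : 0 < t1) by (apply Rmin_glb_lt; [lra|apply Rdiv_lt_0_compat; lra]).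
  assert (Ht1c : t1 * (4 * A + 2) <= B).
  { apply (Rmult_le_compat_r (4 * A + 2)) in Ht1b; [|lra]. unfold Rdiv in Ht1b.
    rewrite Rmult_assoc, Rinv_l, Rmult_1_r in Ht1b by lra. auto. }
  assert (HP1 : A < Phi B t1).
  { assert (Hs : 0 < sin t1) by (apply sin_gt_0; lra).
    pose proof (sin_lt_x t1 Ht1p).
    rewrite Phi_alt by auto. set (r := (B - t1) / sin t1).
    assert (Hr : r * sin t1 = B - t1) by (unfold r; field; lra).
    assert (Hr2 : 2 * A + 1 < r) by nra.
    assert (Hc : 1 / 2 <= cos t1).
    { rewrite <- cos_PI3. destruct (Req_dec t1 (PI / 3)). rewrite H1; lra.
      left. apply cos_decreasing_1; lra. }
    pose proof (ln_pos r ltac:(lra)). nra. }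
  assert (Ht2 : exists t2, t1 < t2 /\ t2 < PI /\ t2 < B /\ Phi B t2 < A).
  { destruct (Rlt_le_dec (2 * PI / 3) B) as [HBb|HBb].
    - exists (2 * PI / 3). split; [lra|]. split; [lra|]. split; [lra|].
      assert (Hc : cos (2 * PI / 3) = - (1 / 2)).
      { replace (2 * PI / 3) with (PI - PI / 3) by field.
        rewrite Rtrigo_facts.cos_pi_minus, cos_PI3. auto. }
      assert (Hs : 0 < sin (2 * PI / 3)) by (apply sin_gt_0; lra).
      rewrite Phi_alt by auto. rewrite Hc.
      set (r := (B - 2 * PI / 3) / sin (2 * PI / 3)).
      assert (Hr : 0 < r) by (apply Rdiv_lt_0_compat; lra).
      pose proof (ln_le_sub1 (r / 2) ltac:(lra)).
      rewrite ln_div in H0 by lra.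
      pose proof (ln_le_sub1 2 ltac:(lra)). lra.
    - exists (3 * B / 4). split.
      { assert (t1 < B / 2); [|lra].
        apply (Rmult_lt_reg_r (4 * A + 2)). lra. nra. }
      split; [lra|]. split; [lra|].
      assert (Hs3 : (3 * B / 4) / 3 <= sin (3 * B / 4)) by (apply sin_third; lra).
      assert (Hs : 0 < sin (3 * B / 4)) by lra.
      rewrite Phi_alt by auto.
      set (r := (B - 3 * B / 4) / sin (3 * B / 4)).
      assert (Hr : 0 < r) by (apply Rdiv_lt_0_compat; lra).
      assert (Hr1 : r <= 1).
      { unfold r. apply (Rmult_le_reg_r (sin (3 * B / 4))); auto.
        unfold Rdiv; rewrite Rmult_assoc, Rinv_l by lra. lra. }
      assert (ln r <= 0).
      { destruct Hr1. left. rewrite <- ln_1. apply ln_increasing; lra. rewrite H0, ln_1; lra. }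
      pose proof (COS_bound (3 * B / 4)). nra. }
  destruct Ht2 as [t2 [H12 [H2P [H2B HP2]]]].
  destruct (Ranalysis5.IVT_interv (fun t => A - Phi B t) t1 t2) as [t [Ht Hf]].
  - intros a Ha. apply (is_derive_cont _ _ (0 - dPhi B a)).
    exact (is_derive_minus (fun _ => A) (Phi B) a 0 (dPhi B a) (is_derive_const A a)
      (Phi_derive B a ltac:(apply sin_gt_0; lra) ltac:(lra))).
  - auto.
  - lra.
  - lra.
  - exists t. split. lra. split. lra. lra.
Qed.

Lemma exist_zero A : 1 < A -> exists r, 0 < r /\ r + ln r = A.
Proof.
  intros HA.
  destruct (Ranalysis5.IVT_interv (fun r => r + ln r - A) 1 A) as [r [Hr Hf]].
  - intros a Ha. apply (is_derive_cont _ _ (1 + / a - 0)).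
    exact (is_derive_minus (fun r => r + ln r) (fun _ => A) a _ 0
      (is_derive_plus (fun r => r) ln a 1 (/ a) (is_derive_id a) (is_derive_ln a ltac:(lra)))
      (is_derive_const A a)).
  - auto.
  - rewrite ln_1. lra.
  - pose proof (ln_pos A HA). lra.
  - exists r. split; lra.
Qed.

Lemma Sol_exists A B : 1 < A -> exists w, Sol A B w.
Proof.
  intros HA. destruct (Rtotal_order B 0) as [H|[H|H]].
  - destruct (exist_pos A (- B) HA ltac:(lra)) as [t [Ht [HtB HP]]].
    exists (Cconj ((- B - t) * cos t / sin t, - B - t)).
    assert (HS : Sol A (- - B) (Cconj ((- B - t) * cos t / sin t, - B - t))).
    { apply Sol_conj; auto. rewrite <- HP. apply Sol_build_pos; auto. }
    rewrite Ropp_involutive in HS. exact HS.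
  - subst. destruct (exist_zero A HA) as [r [Hr HE]]. exists (r, 0).
    rewrite <- HE. apply Sol_build_zero; auto.
  - destruct (exist_pos A B HA H) as [t [Ht [HtB HP]]].
    exists ((B - t) * cos t / sin t, B - t). rewrite <- HP. apply Sol_build_pos; auto.
Qed.

Lemma Cmod_le_sum (c : C) : Cmod c <= Rabs (fst c) + Rabs (snd c).
Proof.
  destruct c as [x y]. unfold Cmod; cbn [fst snd].
  rewrite <- (sqrt_pow2 (Rabs x + Rabs y)) by (pose proof (Rabs_pos x); pose proof (Rabs_pos y); lra).
  apply sqrt_le_1_alt. rewrite <- (pow2_abs x), <- (pow2_abs y).
  pose proof (Rabs_pos x); pose proof (Rabs_pos y). nra.
Qed.

Lemma abs_sin_le x : Rabs (sin x) <= Rabs x.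
Proof.
  pose proof (SIN_bound x) as SB. pose proof PI2_1 as P21.
  destruct (Rle_lt_dec 1 (Rabs x)) as [H|H].
  - apply abs_bnd'. lra.
  - apply abs_lt in H.
    destruct (Rtotal_order x 0) as [H1|[H1|H1]].
    + pose proof (sin_gt_x x H1). pose proof (sin_neg_range x ltac:(lra)).
      rewrite !Rabs_left1; lra.
    + subst. rewrite sin_0. lra.
    + pose proof (sin_lt_x x H1). pose proof (sin_ge_0 x ltac:(lra) ltac:(lra)).
      rewrite !Rabs_pos_eq; lra.
Qed.

Lemma cos_lower x : 1 - x ^ 2 / 2 <= cos x.
Proof.
  replace x with (2 * (x / 2)) at 2 by field. rewrite cos_2a_sin.
  pose proof (abs_sin_le (x / 2)).
  apply Rsqr_le_abs_1 in H. unfold Rsqr in H.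
  lra.
Qed.

Lemma Sol_small_arg A B w a : 1 < A -> Sol A B w -> is_Arg w a -> Rabs a <= Rabs B.
Proof.
  intros HA HS Ha. pose proof HS as [Hr [HE [a' [Ha' HI]]]].
  assert (a' = a) by (apply (arg_unique w); auto). subst a'.
  pose proof (Sol_not_pi A B w a HA HS Ha) as Hnp.
  destruct (is_Arg_eqs w a Ha) as [E1 E2]. destruct Ha as [Hra _].
  unfold Im in HI.
  destruct (Rtotal_order a 0) as [H|[H|H]].
  - pose proof (sin_neg_range' a ltac:(lra)).
    assert (snd w < 0) by (rewrite E2; nra).
    rewrite !Rabs_left; lra.
  - subst. rewrite Rabs_R0. apply Rabs_pos.
  - assert (a < PI) by (destruct Hra as [_ [H1|H1]]; [lra|contradiction]).
    pose proof (sin_gt_0 a H H0).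
    assert (snd w > 0) by (rewrite E2; nra).
    rewrite !Rabs_pos_eq; lra.
Qed.

Lemma ln_mono_diff r r0 : 0 < r -> 0 < r0 -> Rabs (r - r0) <= Rabs ((r + ln r) - (r0 + ln r0)).
Proof.
  intros Hr Hr0. destruct (Rtotal_order r r0) as [H|[H|H]].
  - pose proof (ln_increasing r r0 Hr H). rewrite !Rabs_left; lra.
  - subst. replace (r0 - r0) with 0 by ring. rewrite Rabs_R0. apply Rabs_pos.
  - pose proof (ln_increasing r0 r Hr0 H). rewrite !Rabs_pos_eq; lra.
Qed.

Lemma Sol_cont_zero A0 w0 : 1 < A0 -> Sol A0 0 w0 ->
  forall eps, 0 < eps -> exists del, 0 < del /\ forall A B w,
    Rabs (A - A0) < del -> Rabs (B - 0) < del -> Sol A B w -> Cmod (Cminus w w0) < eps.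
Proof.
  intros HA0 HS0 eps Heps.
  destruct (Sol_zero A0 w0 HA0 HS0) as [Ew0 Hr0E].
  set (r0 := Cmod w0) in *. assert (Hr0 : 0 < r0) by (destruct HS0; auto).
  set (del := Rmin (Rmin 1 (A0 - 1)) (eps / (4 * A0 + 6))).
  assert (Hd1 : del <= 1) by (unfold del; eapply Rle_trans; [apply Rmin_l|apply Rmin_l]).
  assert (Hd2 : del <= A0 - 1) by (unfold del; eapply Rle_trans; [apply Rmin_l|apply Rmin_r]).
  assert (Hd3 : del <= eps / (4 * A0 + 6)) by (unfold del; apply Rmin_r).
  assert (Hdp : 0 < del).
  { unfold del. apply Rmin_glb_lt. apply Rmin_glb_lt; lra. apply Rdiv_lt_0_compat; lra. }
  exists del. split; auto.
  intros A B w HA HB HS.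
  rewrite Rminus_0_r in HB.
  pose proof HS as [Hr [HE [a [Ha HI]]]].
  pose proof (Sol_small_arg A B w a ltac:(apply abs_lt in HA; lra) HS Ha) as Hab.
  assert (Hab' : Rabs a < del) by lra.
  apply abs_lt in HA. apply abs_lt in HB. apply abs_lt in Hab'.
  destruct (is_Arg_eqs w a Ha) as [E1 E2].
  set (r := Cmod w) in *. unfold Re in HE.
  pose proof (cos_lower a) as Hcl. pose proof (COS_bound a) as Hcb.
  assert (Ha2 : a ^ 2 <= del * del) by nra.
  assert (Hc2 : 1 / 2 <= cos a) by nra.
  assert (Hr1 : 1 < r).
  { pose proof (ln_le_sub1 r Hr). assert (r * cos a <= r) by nra. lra. }
  pose proof (ln_pos r Hr1) as Hlr.
  assert (Hr2 : r < 2 * A) by nra.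
  assert (Hg1 : 0 <= r * (1 - cos a)) by nra.
  assert (Hg2 : r * (1 - cos a) <= A * del).
  { assert (r * (1 - cos a) <= r * (a ^ 2 / 2)) by (apply Rmult_le_compat_l; lra).
    assert (r * (a ^ 2 / 2) <= A * (del * del)) by nra.
    nra. }
  assert (Hrr : Rabs (r - r0) <= (A0 + 2) * del).
  { eapply Rle_trans. apply ln_mono_diff; lra.
    replace (r + ln r - (r0 + ln r0)) with (r * (1 - cos a) + (A - A0)) by (rewrite Hr0E, <- HE, E1; ring).
    apply abs_bnd'. nra. }
  apply abs_bnd in Hrr.
  assert (Hsa : Rabs (sin a) <= Rabs a) by apply abs_sin_le.
  assert (Hsa' : Rabs a <= del) by (apply abs_bnd'; lra).
  eapply Rle_lt_trans. apply Cmod_le_sum.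
  rewrite Ew0. unfold Cminus, Cplus, Copp. cbn [fst snd]. rewrite E1, E2.
  replace (r * cos a + - r0) with ((r - r0) - r * (1 - cos a)) by ring.
  replace (r * sin a + - 0) with (r * sin a) by ring.
  assert (Rabs (r - r0 - r * (1 - cos a)) <= (A0 + 2) * del + A * del).
  { apply abs_bnd'. lra. }
  assert (Rabs (r * sin a) <= 2 * A * del).
  { rewrite Rabs_mult, (Rabs_pos_eq r) by lra. nra. }
  assert ((4 * A0 + 6) * del <= eps).
  { apply (Rmult_le_compat_l (4 * A0 + 6)) in Hd3; [|lra].
    replace ((4 * A0 + 6) * (eps / (4 * A0 + 6))) with eps in Hd3 by (field; lra). lra. }
  nra.
Qed.

Lemma Phi_B_cont t B0 : 0 < sin t -> t < B0 -> continuity_pt (fun B => Phi B t) B0.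
Proof.
  intros Hs Ht. apply (is_derive_cont _ _ (cos t / sin t + 1 / (B0 - t))).
  unfold Phi. auto_derive.
  - repeat split; try lra. apply Rdiv_lt_0_compat; lra.
  - field. lra.
Qed.

Lemma theta_cont A0 B0 t0 : 0 < t0 < PI -> t0 < B0 -> Phi B0 t0 = A0 ->
  forall eta, 0 < eta -> exists del, 0 < del /\ forall A B t,
    Rabs (A - A0) < del -> Rabs (B - B0) < del -> 0 < t < PI -> t < B -> Phi B t = A ->
    Rabs (t - t0) < eta.
Proof.
  intros Ht0 HtB0 HP0 eta Heta.
  set (e := Rmin eta (Rmin (t0 / 2) (Rmin ((PI - t0) / 2) ((B0 - t0) / 2)))).
  assert (He1 : e <= eta) by apply Rmin_l.
  assert (He2 : e <= t0 / 2) by (unfold e; eapply Rle_trans; [apply Rmin_r|apply Rmin_l]).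
  assert (He3 : e <= (PI - t0) / 2) by (unfold e; eapply Rle_trans; [apply Rmin_r|]; eapply Rle_trans; [apply Rmin_r|apply Rmin_l]).
  assert (He4 : e <= (B0 - t0) / 2) by (unfold e; eapply Rle_trans; [apply Rmin_r|]; eapply Rle_trans; [apply Rmin_r|apply Rmin_r]).
  assert (Hep : 0 < e).
  { unfold e. repeat apply Rmin_glb_lt; lra. }
  set (p := t0 - e). set (q := t0 + e).
  assert (Hsp : 0 < sin p) by (apply sin_gt_0; unfold p; lra).
  assert (Hsq : 0 < sin q) by (apply sin_gt_0; unfold q; lra).
  assert (Hp : A0 < Phi B0 p) by (rewrite <- HP0; apply Phi_decr; unfold p; lra).
  assert (Hq : Phi B0 q < A0) by (rewrite <- HP0; apply Phi_decr; unfold q; lra).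
  set (g := Rmin (Phi B0 p - A0) (A0 - Phi B0 q)).
  assert (Hg1 : g <= Phi B0 p - A0) by apply Rmin_l.
  assert (Hg2 : g <= A0 - Phi B0 q) by apply Rmin_r.
  assert (Hgp : 0 < g) by (apply Rmin_glb_lt; lra).
  destruct (cont_eps _ _ (Phi_B_cont p B0 Hsp ltac:(unfold p; lra)) (g / 2) ltac:(lra)) as [dp [Hdp Hdp']].
  destruct (cont_eps _ _ (Phi_B_cont q B0 Hsq ltac:(unfold q; lra)) (g / 2) ltac:(lra)) as [dq [Hdq Hdq']].
  set (del := Rmin (Rmin (g / 2) (B0 - q)) (Rmin dp dq)).
  assert (Hd1 : del <= g / 2) by (unfold del; eapply Rle_trans; [apply Rmin_l|apply Rmin_l]).
  assert (Hd2 : del <= B0 - q) by (unfold del; eapply Rle_trans; [apply Rmin_l|apply Rmin_r]).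
  assert (Hd3 : del <= dp) by (unfold del; eapply Rle_trans; [apply Rmin_r|apply Rmin_l]).
  assert (Hd4 : del <= dq) by (unfold del; eapply Rle_trans; [apply Rmin_r|apply Rmin_r]).
  exists del. split.
  { unfold del. repeat apply Rmin_glb_lt; unfold q in *; lra. }
  intros A B t HA HB Ht HtB HPt.
  specialize (Hdp' B ltac:(lra)). specialize (Hdq' B ltac:(lra)).
  apply abs_lt in Hdp'. apply abs_lt in Hdq'. apply abs_lt in HA. apply abs_lt in HB.
  assert (HBq : q < B) by lra.
  apply abs_lt'.
  assert (p < t).
  { destruct (Rtotal_order t p) as [H|[H|H]]; auto.
    - assert (Phi B p < Phi B t) by (apply Phi_decr; unfold p, q in *; lra). lra.
    - subst t. lra. }
  assert (t < q).
  { destruct (Rtotal_order t q) as [H1|[H1|H1]]; auto.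
    - subst t. lra.
    - assert (Phi B t < Phi B q) by (apply Phi_decr; unfold p, q in *; lra). lra. }
  unfold p, q in *. lra.
Qed.

Lemma Sol_cont_pos A0 B0 w0 : 1 < A0 -> 0 < B0 -> Sol A0 B0 w0 ->
  forall eps, 0 < eps -> exists del, 0 < del /\ forall A B w,
    Rabs (A - A0) < del -> Rabs (B - B0) < del -> Sol A B w -> Cmod (Cminus w w0) < eps.
Proof.
  intros HA0 HB0 HS0 eps Heps.
  destruct (Sol_pos A0 B0 w0 HA0 HS0 HB0) as [t0 [Ht0 [Ht0B [HP0 Ew0]]]].
  set (G := fun t => cos t / sin t).
  assert (Hs0 : 0 < sin t0) by (apply sin_gt_0; lra).
  assert (HGc : continuity_pt G t0).
  { unfold G. apply continuity_pt_div. apply continuity_cos. apply continuity_sin. lra. }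
  set (M := Rabs (G t0) + 1). set (Y0 := Rabs (B0 - t0)).
  assert (HM : 1 <= M) by (unfold M; pose proof (Rabs_pos (G t0)); lra).
  assert (HY : 0 <= Y0) by apply Rabs_pos.
  set (e1 := Rmin 1 (eps / (4 * (Y0 + 1)))).
  assert (He1p : 0 < e1) by (apply Rmin_glb_lt; [lra|apply Rdiv_lt_0_compat; lra]).
  assert (He1a : e1 <= 1) by apply Rmin_l.
  assert (He1b : e1 <= eps / (4 * (Y0 + 1))) by apply Rmin_r.
  destruct (cont_eps G t0 HGc e1 He1p) as [eG [HeG HeG']].
  set (k := eps / (8 * (M + 1))).
  assert (Hk : 0 < k) by (apply Rdiv_lt_0_compat; lra).
  set (eta := Rmin eG k).
  assert (Heta : 0 < eta) by (apply Rmin_glb_lt; lra).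
  destruct (theta_cont A0 B0 t0 Ht0 Ht0B HP0 eta Heta) as [d1 [Hd1 Hd1']].
  set (del := Rmin (Rmin d1 (A0 - 1)) (Rmin B0 k)).
  assert (Hda : del <= d1) by (unfold del; eapply Rle_trans; [apply Rmin_l|apply Rmin_l]).
  assert (Hdb : del <= A0 - 1) by (unfold del; eapply Rle_trans; [apply Rmin_l|apply Rmin_r]).
  assert (Hdc : del <= B0) by (unfold del; eapply Rle_trans; [apply Rmin_r|apply Rmin_l]).
  assert (Hdd : del <= k) by (unfold del; eapply Rle_trans; [apply Rmin_r|apply Rmin_r]).
  exists del. split.
  { unfold del. repeat apply Rmin_glb_lt; lra. }
  intros A B w HA HB HS.
  pose proof (abs_lt _ _ HA) as HA'. pose proof (abs_lt _ _ HB) as HB'.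
  destruct (Sol_pos A B w ltac:(lra) HS ltac:(lra)) as [t [Ht [HtB [HP Ew]]]].
  assert (Htt : Rabs (t - t0) < eta) by (apply (Hd1' A B t); auto; lra).
  assert (HGt : Rabs (G t - G t0) < e1) by (apply HeG'; eapply Rlt_le_trans; [exact Htt|apply Rmin_l]).
  assert (Htk : Rabs (t - t0) < k) by (eapply Rlt_le_trans; [exact Htt|apply Rmin_r]).
  assert (HGM : Rabs (G t) <= M).
  { unfold M. replace (G t) with ((G t - G t0) + G t0) by ring.
    eapply Rle_trans. apply Rabs_triang. lra. }
  set (D := (B - t) - (B0 - t0)).
  assert (HD : Rabs D < 2 * k).
  { unfold D. apply abs_lt'. apply abs_lt in Htk. lra. }
  assert (HRe : Rabs (D * G t + (B0 - t0) * (G t - G t0)) < eps / 2).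
  { eapply Rle_lt_trans. apply Rabs_triang. rewrite !Rabs_mult. fold Y0.
    assert (Rabs D * Rabs (G t) <= 2 * k * M).
    { apply Rmult_le_compat; try apply Rabs_pos; lra. }
    assert (Y0 * Rabs (G t - G t0) <= Y0 * e1) by (apply Rmult_le_compat_l; lra).
    assert (Y0 * e1 <= Y0 * (eps / (4 * (Y0 + 1)))) by (apply Rmult_le_compat_l; lra).
    assert (Y0 * (eps / (4 * (Y0 + 1))) < eps / 4).
    { apply (Rmult_lt_reg_r (4 * (Y0 + 1))). lra. field_simplify; lra. }
    assert (2 * k * M < eps / 4).
    { unfold k. apply (Rmult_lt_reg_r (4 * (M + 1))). lra. field_simplify; lra. }
    lra. }
  eapply Rle_lt_trans. apply Cmod_le_sum.
  assert (Hst : 0 < sin t) by (apply sin_gt_0; lra).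
  rewrite Ew, Ew0. unfold Cminus, Cplus, Copp. cbn [fst snd].
  replace ((B - t) * cos t / sin t + - ((B0 - t0) * cos t0 / sin t0)) with (D * G t + (B0 - t0) * (G t - G t0))
    by (unfold D, G; field; split; lra).
  replace (B - t + - (B0 - t0)) with D by (unfold D; ring).
  assert (k <= eps / 8).
  { unfold k, Rdiv. apply Rmult_le_compat_l; [lra|]. apply Rinv_le_contravar; lra. }
  lra.
Qed.

Lemma Sol_cont A0 B0 w0 : 1 < A0 -> Sol A0 B0 w0 ->
  forall eps, 0 < eps -> exists del, 0 < del /\ forall A B w,
    Rabs (A - A0) < del -> Rabs (B - B0) < del -> Sol A B w -> Cmod (Cminus w w0) < eps.
Proof.
  intros HA0 HS0 eps Heps.
  destruct (Rtotal_order B0 0) as [H|[H|H]].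
  - destruct (Sol_cont_pos A0 (- B0) (Cconj w0) HA0 ltac:(lra) (Sol_conj A0 B0 w0 HA0 HS0) eps Heps)
      as [d [Hd Hd']].
    exists (Rmin d (A0 - 1)). split. apply Rmin_glb_lt; lra.
    intros A B w HA HB HS.
    assert (HA1 : Rabs (A - A0) < d) by (eapply Rlt_le_trans; [exact HA|apply Rmin_l]).
    assert (HA2 : Rabs (A - A0) < A0 - 1) by (eapply Rlt_le_trans; [exact HA|apply Rmin_r]).
    assert (HB1 : Rabs (B - B0) < d) by (eapply Rlt_le_trans; [exact HB|apply Rmin_l]).
    apply abs_lt in HA2.
    specialize (Hd' A (- B) (Cconj w) HA1).
    replace (- B - - B0) with (- (B - B0)) in Hd' by ring. rewrite Rabs_Ropp in Hd'.
    specialize (Hd' HB1 (Sol_conj A B w ltac:(lra) HS)).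
    replace (Cminus (Cconj w) (Cconj w0)) with (Cconj (Cminus w w0)) in Hd'.
    rewrite Cmod_conj in Hd'. auto.
    unfold Cconj, Cminus, Cplus, Copp. apply C_eq; simpl; ring.
  - subst. apply Sol_cont_zero; auto.
  - apply Sol_cont_pos; auto.
Qed.

Lemma mvt0 (f f' : R -> R) t :
  (forall c, Rabs c <= Rabs t -> is_derive f c (f' c)) ->
  exists c, Rabs c <= Rabs t /\ Rabs (f t - f 0) = Rabs (f' c) * Rabs t.
Proof.
  intros H. destruct (MVT_abs f f' 0 t) as [c [Hc Hr]].
  - intros c Hc. apply is_derive_Reals. apply H.
    unfold Rmin, Rmax in Hc. destruct (Rle_dec 0 t).
    + rewrite !Rabs_pos_eq; lra.
    + apply abs_bnd'. rewrite Rabs_left; lra.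
  - exists c. split.
    + unfold Rmin, Rmax in Hr. destruct (Rle_dec 0 t).
      * rewrite !Rabs_pos_eq; lra.
      * apply abs_bnd'. rewrite Rabs_left; lra.
    + rewrite Hc. f_equal. f_equal. ring.
Qed.

Lemma exp_m1 t : Rabs t <= 1 -> Rabs (exp t - 1) <= 3 * Rabs t.
Proof.
  intros Ht. destruct (mvt0 exp exp t) as [c [Hc Hr]].
  - intros c _. apply is_derive_exp.
  - rewrite exp_0 in Hr. rewrite Hr. apply Rmult_le_compat_r. apply Rabs_pos.
    rewrite Rabs_pos_eq by (left; apply exp_pos).
    apply abs_bnd in Hc. pose proof exp_le_3.
    destruct (Req_dec c 1). subst; lra.
    left. eapply Rlt_le_trans; [|exact H]. apply exp_increasing. lra.
Qed.

Lemma exp_m2 t : Rabs t <= 1 -> Rabs (exp t - 1 - t) <= 3 * t ^ 2.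
Proof.
  intros Ht. destruct (mvt0 (fun x => exp x - x) (fun x => exp x - 1) t) as [c [Hc Hr]].
  - intros c _. auto_derive; auto. ring.
  - rewrite exp_0 in Hr. replace (exp t - 1 - t) with (exp t - t - (1 - 0)) by ring. rewrite Hr.
    pose proof (exp_m1 c ltac:(lra)).
    rewrite <- (pow2_abs t). 
    assert (Rabs (exp c - 1) <= 3 * Rabs t) by lra.
    pose proof (Rabs_pos t). pose proof (Rabs_pos (exp c - 1)). nra.
Qed.

Lemma sin_m1 t : Rabs t <= 1 -> Rabs (sin t - t) <= t ^ 2.
Proof.
  intros Ht. destruct (mvt0 (fun x => sin x - x) (fun x => cos x - 1) t) as [c [Hc Hr]].
  - intros c _. auto_derive; auto. ring.
  - rewrite sin_0 in Hr. replace (sin t - t) with (sin t - t - (0 - 0)) by ring. rewrite Hr.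
    pose proof (cos_lower c) as CL. pose proof (COS_bound c) as CB.
    rewrite <- (pow2_abs t).
    assert (Rabs (cos c - 1) <= Rabs t).
    { rewrite Rabs_left1 by lra. rewrite <- (pow2_abs c) in CL.
      pose proof (Rabs_pos c). nra. }
    pose proof (Rabs_pos t). pose proof (Rabs_pos (cos c - 1)). nra.
Qed.

Lemma Cexp_rem u : Cmod u <= 1 ->
  Cmod (Cminus (Cminus (Cexp u) 1) u) <= 8 * Cmod u ^ 2.
Proof.
  intros Hu. destruct u as [a b].
  pose proof (Rabs_fst_le (a, b)) as Ha. pose proof (Rabs_snd_le (a, b)) as Hb. cbn [fst snd] in Ha, Hb.
  set (m := Cmod (a, b)) in *.
  eapply Rle_trans. apply Cmod_le_sum.
  unfold Cexp, Cminus, Cplus, Copp, RtoC, Re, Im. cbn [fst snd].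
  replace (exp a * cos b + - (1) + - a) with ((exp a - 1 - a) * cos b + (1 + a) * (cos b - 1)) by ring.
  replace (exp a * sin b + - 0 + - b) with ((exp a - 1) * sin b + (sin b - b)) by ring.
  pose proof (exp_m2 a ltac:(lra)). pose proof (exp_m1 a ltac:(lra)).
  pose proof (sin_m1 b ltac:(lra)). pose proof (cos_lower b). pose proof (COS_bound b).
  pose proof (abs_sin_le b). pose proof (Rabs_pos a). pose proof (Rabs_pos b).
  assert (E1 : Rabs ((exp a - 1 - a) * cos b + (1 + a) * (cos b - 1)) <= 4 * m ^ 2).
  { eapply Rle_trans. apply Rabs_triang. rewrite !Rabs_mult.
    assert (Rabs (cos b) <= 1) by (apply abs_bnd'; lra).
    assert (Rabs (1 + a) <= 2) by (apply abs_bnd'; apply abs_bnd in Ha; lra).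
    assert (Rabs (cos b - 1) <= b ^ 2 / 2) by (apply abs_bnd'; split; nra).
    assert (a ^ 2 <= m ^ 2) by (rewrite <- (pow2_abs a); nra).
    assert (b ^ 2 <= m ^ 2) by (rewrite <- (pow2_abs b); nra).
    pose proof (Rabs_pos (exp a - 1 - a)). pose proof (Rabs_pos (cos b)).
    pose proof (Rabs_pos (1 + a)). pose proof (Rabs_pos (cos b - 1)).
    nra. }
  assert (E2 : Rabs ((exp a - 1) * sin b + (sin b - b)) <= 4 * m ^ 2).
  { eapply Rle_trans. apply Rabs_triang. rewrite !Rabs_mult.
    assert (b ^ 2 <= m ^ 2) by (rewrite <- (pow2_abs b); nra).
    pose proof (Rabs_pos (exp a - 1)). pose proof (Rabs_pos (sin b)).
    assert (Rabs (exp a - 1) * Rabs (sin b) <= 3 * Rabs a * Rabs b).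
    { apply Rmult_le_compat; auto; lra. }
    nra. }
  lra.
Qed.

Lemma C_neq0 (c : C) : 0 < Cmod c -> c <> RtoC 0.
Proof. intros H E. rewrite E, Cmod_0 in H. lra. Qed.

Lemma deriv_gen (W : C -> C) (z0 : C) (S : C -> Prop) :
  Cmult (W z0) (Cexp (W z0)) = z0 -> 0 < Cmod (Cplus 1 (W z0)) ->
  (forall eps, 0 < eps -> exists del, 0 < del /\ forall z, S z -> Cmod (Cminus z z0) < del ->
      Cmult (W z) (Cexp (W z)) = z /\ Cmod (Cminus (W z) (W z0)) < eps) ->
  forall eps, 0 < eps -> exists del, 0 < del /\ forall z, S z -> Cmod (Cminus z z0) < del ->
     Cmod (Cminus (Cminus (W z) (W z0)) (Cmult (Cminus z z0) (Cinv (Cmult (Cplus 1 (W z0)) (Cexp (W z0))))))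
       <= eps * Cmod (Cminus z z0).
Proof.
  intros Hz0 H1w Hcont eps Heps.
  set (w0 := W z0) in *.
  set (d := Cinv (Cmult (Cplus 1 w0) (Cexp w0))).
  assert (Hce : 0 < Cmod (Cexp w0)) by (rewrite Cmod_Cexp; apply exp_pos).
  set (N := (8 * Cmod w0 + 9) / Cmod (Cplus 1 w0)).
  assert (HN : 0 < N) by (apply Rdiv_lt_0_compat; auto; pose proof (Cmod_ge_0 w0); lra).
  set (D := Cmod d). assert (HD : 0 <= D) by apply Cmod_ge_0.
  set (e' := Rmin 1 (Rmin (1 / (2 * N + 1)) (eps / (2 * N * D + 1)))).
  assert (He1 : e' <= 1) by apply Rmin_l.
  assert (He2 : e' <= 1 / (2 * N + 1)) by (unfold e'; eapply Rle_trans; [apply Rmin_r|apply Rmin_l]).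
  assert (He3 : e' <= eps / (2 * N * D + 1)) by (unfold e'; eapply Rle_trans; [apply Rmin_r|apply Rmin_r]).
  assert (He' : 0 < e').
  { unfold e'. repeat apply Rmin_glb_lt; try lra; apply Rdiv_lt_0_compat; nra. }
  destruct (Hcont e' He') as [del [Hdel Hdel']].
  exists del. split; auto. intros z HS Hz.
  destruct (Hdel' z HS Hz) as [Hhz Hm].
  set (u := Cminus (W z) w0) in *.
  set (m := Cmod u) in *.
  assert (HWz : W z = Cplus w0 u) by (unfold u; ring).
  set (E := Cplus (Cmult (Cplus w0 u) (Cminus (Cminus (Cexp u) 1) u)) (Cmult u u)).
  assert (Key : Cminus u (Cmult (Cminus z z0) d) = Cdiv (Copp E) (Cplus 1 w0)).
  { rewrite <- Hhz, <- Hz0. rewrite HWz, Cexp_add. unfold d, E.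
    field. split; apply C_neq0; auto. }
  assert (Hm1 : m <= 1) by lra.
  assert (Hm0 : 0 <= m) by apply Cmod_ge_0.
  assert (HE : Cmod E <= (8 * Cmod w0 + 9) * m ^ 2).
  { unfold E. eapply Rle_trans. apply Cmod_triangle. rewrite !Cmod_mult.
    pose proof (Cexp_rem u Hm1) as R. fold m in R.
    assert (Cmod (Cplus w0 u) <= Cmod w0 + 1) by (eapply Rle_trans; [apply Cmod_triangle|]; fold m; lra).
    pose proof (Cmod_ge_0 (Cplus w0 u)). pose proof (Cmod_ge_0 (Cminus (Cminus (Cexp u) 1) u)).
    pose proof (Cmod_ge_0 w0).
    assert (Cmod (Cplus w0 u) * Cmod (Cminus (Cminus (Cexp u) 1) u) <= (Cmod w0 + 1) * (8 * m ^ 2)).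
    { apply Rmult_le_compat; auto. }
    fold m. nra. }
  assert (HK : Cmod (Cminus u (Cmult (Cminus z z0) d)) <= N * m ^ 2).
  { rewrite Key. unfold Cdiv. rewrite Cmod_mult, Cmod_inv, Cmod_opp by (apply C_neq0; auto).
    unfold N. unfold Rdiv. rewrite (Rmult_comm (8 * Cmod w0 + 9)), Rmult_assoc, (Rmult_comm (Cmod E)).
    apply Rmult_le_compat_l. left; apply Rinv_0_lt_compat; auto. lra. }
  assert (HNm : N * m <= 1 / 2).
  { assert (N * m <= N * (1 / (2 * N + 1))) by (apply Rmult_le_compat_l; lra).
    assert (N * (1 / (2 * N + 1)) <= 1 / 2).
    { apply (Rmult_le_reg_r (2 * (2 * N + 1))). lra. field_simplify; lra. }
    lra. }
  assert (HuD : m <= 2 * D * Cmod (Cminus z z0)).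
  { assert (m <= D * Cmod (Cminus z z0) + N * m ^ 2).
    { unfold m. replace u with (Cplus (Cmult (Cminus z z0) d) (Cminus u (Cmult (Cminus z z0) d))) at 1 by ring.
      eapply Rle_trans. apply Cmod_triangle. rewrite Cmod_mult. fold m. unfold D. lra. }
    nra. }
  assert (H2N : 2 * N * D * m <= eps).
  { assert (2 * N * D * m <= 2 * N * D * (eps / (2 * N * D + 1))).
    { apply Rmult_le_compat_l. nra. lra. }
    assert (2 * N * D * (eps / (2 * N * D + 1)) <= eps).
    { apply (Rmult_le_reg_r (2 * N * D + 1)). nra. field_simplify; nra. }
    lra. }
  fold u. eapply Rle_trans. exact HK.
  pose proof (Cmod_ge_0 (Cminus z z0)).
  replace (N * m ^ 2) with ((N * m) * m) by ring.
  assert (N * m * m <= N * m * (2 * D * Cmod (Cminus z z0))) by (apply Rmult_le_compat_l; nra).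
  nra.
Qed.

Lemma texp_incr s t : 0 <= s -> s < t -> s * exp s < t * exp t.
Proof.
  intros Hs Hst. pose proof (exp_increasing s t Hst). pose proof (exp_pos s). nra.
Qed.

Lemma W0R_spec x : exp 1 < x -> -1 <= W0R x /\ W0R x * exp (W0R x) = x.
Proof.
  intros Hx. unfold W0R. apply epsilon_spec.
  pose proof (exp_pos 1).
  destruct (IVT (fun w => w * exp w - x) 1 x) as [w [Hw Hf]].
  - intros t. apply (is_derive_cont _ _ (1 * exp t + t * exp t - 0)).
    auto_derive; auto. ring.
  - pose proof (exp_ineq1_le 1). lra.
  - rewrite Rmult_1_l. lra.
  - assert (1 < exp x) by (rewrite <- exp_0; apply exp_increasing; lra). nra.
  - exists w. split. lra. lra.
Qed.

Lemma W0R_gt1 x : exp 1 < x -> 1 < W0R x.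
Proof.
  intros Hx. destruct (W0R_spec x Hx) as [H1 H2].
  destruct (Rlt_le_dec 1 (W0R x)); auto.
  exfalso. destruct (Rlt_le_dec (W0R x) 0).
  - pose proof (exp_pos (W0R x)). pose proof (exp_pos 1). nra.
  - destruct (Req_dec (W0R x) 1). rewrite H in H2. lra.
    pose proof (texp_incr (W0R x) 1 r0 ltac:(lra)). lra.
Qed.

Lemma LW_Sol k z b : exp 1 < Cmod z -> is_Arg z b ->
  Sol (ln (Cmod z)) (b + 2 * PI * IZR k) (LambertW k z).
Proof.
  intros Hz Hb. assert (Hz0 : 0 < Cmod z) by (pose proof (exp_pos 1); lra).
  assert (HA : 1 < ln (Cmod z)) by (rewrite <- (ln_exp 1); apply ln_increasing; auto; apply exp_pos).
  apply (rel_iff k z b); auto.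
  unfold LambertW. apply epsilon_spec.
  destruct (Sol_exists _ (b + 2 * PI * IZR k) HA) as [w Hw].
  exists w. apply (rel_iff k z b); auto.
Qed.

Lemma LW_rel k z : exp 1 < Cmod z -> Cmult (LambertW k z) (Cexp (LambertW k z)) = z.
Proof.
  intros Hz. assert (Hz0 : 0 < Cmod z) by (pose proof (exp_pos 1); lra).
  destruct (arg_exists z Hz0) as [b Hb].
  pose proof (LW_Sol k z b Hz Hb) as HS.
  apply (rel_iff k z b) in HS; auto. destruct HS; auto.
Qed.

Lemma Cmod_rev a b : Rabs (Cmod a - Cmod b) <= Cmod (Cminus a b).
Proof.
  apply abs_bnd'. split.
  - pose proof (Cmod_triangle (Cminus b a) a).
    replace (Cplus (Cminus b a) a) with b in H by ring.
    replace (Cminus b a) with (Copp (Cminus a b)) in H by ring. rewrite Cmod_opp in H. lra.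
  - pose proof (Cmod_triangle (Cminus a b) b).
    replace (Cplus (Cminus a b) b) with a in H by ring. lra.
Qed.

Lemma arg_negreal z : snd z = 0 -> fst z < 0 -> is_Arg z PI.
Proof.
  intros H1 H2. split. pose proof PI_RGT_0; lra.
  rewrite cos_PI, sin_PI. destruct z as [x y]; simpl in *. subst.
  assert (Cmod (x, 0) = - x).
  { unfold Cmod; cbn [fst snd]. replace (x ^ 2 + 0 ^ 2) with ((- x) ^ 2) by ring.
    apply sqrt_pow2; lra. }
  rewrite H. apply C_eq; simpl; ring.
Qed.

Lemma ln_cont_eps x : 0 < x -> forall eps, 0 < eps -> exists del, 0 < del /\
  forall y, Rabs (y - x) < del -> Rabs (ln y - ln x) < eps.
Proof.
  intros Hx. apply cont_eps. apply (is_derive_cont _ _ (/ x)). apply is_derive_ln; auto.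
Qed.

Lemma cont_hyp k z b0 (S : C -> Prop) : exp 1 < Cmod z -> is_Arg z b0 ->
  (forall eta, 0 < eta -> exists del, 0 < del /\ forall z', S z' ->
     Cmod (Cminus z' z) < del -> exists b, is_Arg z' b /\ Rabs (b - b0) < eta) ->
  forall eps, 0 < eps -> exists del, 0 < del /\ forall z', S z' -> Cmod (Cminus z' z) < del ->
    Cmult (LambertW k z') (Cexp (LambertW k z')) = z' /\
    Cmod (Cminus (LambertW k z') (LambertW k z)) < eps.
Proof.
  intros Hz Hb Harg eps Heps.
  assert (Hz0 : 0 < Cmod z) by (pose proof (exp_pos 1); lra).
  assert (HA : 1 < ln (Cmod z)) by (rewrite <- (ln_exp 1); apply ln_increasing; auto; apply exp_pos).
  destruct (Sol_cont _ _ _ HA (LW_Sol k z b0 Hz Hb) eps Heps) as [d1 [Hd1 Hd1']].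
  destruct (ln_cont_eps (Cmod z) Hz0 d1 Hd1) as [d2 [Hd2 Hd2']].
  destruct (Harg d1 Hd1) as [d3 [Hd3 Hd3']].
  exists (Rmin (Rmin d2 d3) (Cmod z - exp 1)). split.
  { repeat apply Rmin_glb_lt; lra. }
  intros z' HS Hz'.
  assert (Ha : Cmod (Cminus z' z) < d2) by (eapply Rlt_le_trans; [exact Hz'|]; eapply Rle_trans; apply Rmin_l).
  assert (Hb' : Cmod (Cminus z' z) < d3) by (eapply Rlt_le_trans; [exact Hz'|]; eapply Rle_trans; [apply Rmin_l|apply Rmin_r]).
  assert (Hc : Cmod (Cminus z' z) < Cmod z - exp 1) by (eapply Rlt_le_trans; [exact Hz'|apply Rmin_r]).
  pose proof (Cmod_rev z' z) as Hrev.
  assert (Hz'e : exp 1 < Cmod z').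
  { assert (Rabs (Cmod z' - Cmod z) < Cmod z - exp 1) by lra. apply abs_lt in H. lra. }
  split. apply LW_rel; auto.
  destruct (Hd3' z' HS Hb') as [b' [Hb'1 Hb'2]].
  apply (Hd1' (ln (Cmod z')) (b' + 2 * PI * IZR k)).
  - apply Hd2'. lra.
  - replace (b' + 2 * PI * IZR k - (b0 + 2 * PI * IZR k)) with (b' - b0) by ring. auto.
  - apply LW_Sol; auto.
Qed.

Lemma arg_cut_hyp (z : C) : forall eta, 0 < eta -> exists del, 0 < del /\ forall z',
  (snd z' = 0 /\ fst z' < 0) -> Cmod (Cminus z' z) < del ->
  exists b, is_Arg z' b /\ Rabs (b - PI) < eta.
Proof.
  intros eta Heta. exists 1. split. lra. intros z' [H1 H2] _. exists PI. split.
  apply arg_negreal; auto. rewrite Rminus_diag, Rabs_R0. auto.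
Qed.

Lemma arg_cont_T z0 b0 : 0 < Cmod z0 -> is_Arg z0 b0 -> - PI < b0 < PI ->
  forall eta, 0 < eta -> exists del, 0 < del /\ forall z, True ->
    Cmod (Cminus z z0) < del -> exists b, is_Arg z b /\ Rabs (b - b0) < eta.
Proof.
  intros H1 H2 H3 eta Heta. destruct (arg_cont z0 b0 H1 H2 H3 eta Heta) as [d [Hd Hd']].
  exists d. split; auto.
Qed.

Theorem theorem4 (k : Z) (z : C) (hz : exp 1 < Cmod z) :
  exists d : C, LambertW_deriv k z d /\
    Cmod d <= / Cmod z * (W0R (Cmod z) / (W0R (Cmod z) - 1)).
Proof.
  assert (Hz0 : 0 < Cmod z) by (pose proof (exp_pos 1); lra).
  pose proof (LW_rel k z hz) as Hh.
  set (w0 := LambertW k z) in *.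
  assert (Hmz : Cmod z = Cmod w0 * exp (Re w0)).
  { transitivity (Cmod (Cmult w0 (Cexp w0))). rewrite Hh; auto. rewrite Cmod_mult, Cmod_Cexp. auto. }
  destruct (W0R_spec (Cmod z) hz) as [_ HWe]. pose proof (W0R_gt1 (Cmod z) hz) as HW1.
  set (W := W0R (Cmod z)) in *.
  assert (HRe : Re w0 <= Cmod w0) by (pose proof (re_le_Cmod w0); pose proof (Rle_abs (Re w0)); lra).
  assert (Hrw : W <= Cmod w0).
  { destruct (Rle_lt_dec W (Cmod w0)); auto. exfalso.
    pose proof (texp_incr (Cmod w0) W (Cmod_ge_0 w0) r).
    assert (exp (Re w0) <= exp (Cmod w0)).
    { destruct HRe. left; apply exp_increasing; auto. rewrite H0; lra. }
    pose proof (Cmod_ge_0 w0). nra. }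
  assert (H1w : Cmod w0 - 1 <= Cmod (Cplus 1 w0)).
  { pose proof (Cmod_triangle (Cplus 1 w0) (Copp 1)).
    replace (Cplus (Cplus 1 w0) (Copp 1)) with w0 in H by ring. rewrite Cmod_opp, Cmod_1 in H. lra. }
  assert (H1w' : 0 < Cmod (Cplus 1 w0)) by lra.
  exists (Cinv (Cmult (Cplus 1 w0) (Cexp w0))).
  split.
  - split.
    + intros [Him Hre].
      apply to_R_derive. intros eps Heps.
      assert (HbPI : is_Arg z PI) by (apply arg_negreal; auto).
      destruct (deriv_gen (LambertW k) z (fun z' => snd z' = 0 /\ fst z' < 0) Hh H1w'
                 (cont_hyp k z PI _ hz HbPI (arg_cut_hyp z))
                 eps Heps) as [del [Hdel Hdel']].
      exists (Rmin del (- fst z)). split. unfold Re in Hre. apply Rmin_glb_lt; lra.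
      intros t Ht.
      assert (E : Cminus (Cplus z (RtoC t)) z = RtoC t) by (apply C_eq; simpl; ring).
      specialize (Hdel' (Cplus z (RtoC t))). rewrite E, Cmod_R in Hdel'. apply Hdel'.
      * assert (Rabs t < - fst z) by (eapply Rlt_le_trans; [exact Ht|apply Rmin_r]).
        apply abs_lt in H. unfold Im in Him. simpl. split; lra.
      * eapply Rlt_le_trans; [exact Ht|apply Rmin_l].
    + intros Hoff. apply to_C_derive. intros eps Heps.
      destruct (arg_exists z Hz0) as [b0 Hb0].
      assert (Hr : - PI < b0 < PI).
      { destruct Hb0 as [[H1 H2] H3]. split; auto. destruct H2; auto. subst b0. exfalso. apply Hoff.
        rewrite cos_PI, sin_PI in H3. unfold on_neg_real_axis. rewrite H3. unfold Im, Re; simpl. split. ring. nra. }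
      destruct (deriv_gen (LambertW k) z (fun _ => True) Hh H1w'
                 (cont_hyp k z b0 _ hz Hb0 (arg_cont_T z b0 Hz0 Hb0 Hr))
                 eps Heps) as [del [Hdel Hdel']].
      exists del. split; [exact Hdel|]. intros z' Hz'. apply Hdel'; auto.
  - rewrite Cmod_inv.
    2: { intros E. apply (f_equal Cmod) in E. rewrite Cmod_0, Cmod_mult, Cmod_Cexp in E.
         pose proof (exp_pos (Re w0)). nra. }
    rewrite Cmod_mult, Cmod_Cexp. rewrite Hmz.
    set (q := Cmod (Cplus 1 w0)) in *. set (r := Cmod w0) in *. set (X := exp (Re w0)).
    assert (HX : 0 < X) by apply exp_pos.
    replace (/ (r * X) * (W / (W - 1))) with (/ ((W - 1) * r * X / W)) by (field; repeat split; lra).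
    apply Rinv_le_contravar.
    + apply Rdiv_lt_0_compat; [|lra]. apply Rmult_lt_0_compat; [|lra]. apply Rmult_lt_0_compat; lra.
    + apply (Rmult_le_reg_r W). lra. unfold Rdiv. rewrite Rmult_assoc, Rinv_l, Rmult_1_r by lra.
      assert ((W - 1) * r <= q * W) by nra. nra.
Qed.
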